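(* Run the generalized SMO algorithm with $\tau=0$ from some $\theta^0\in\mathcal F$ and suppose it never stops, i.e. $\Delta^k>0$ for all $k$. Then there are infinitely many iterations $k$ at which the update is not clipped.
   Context: Setup. Let $n,p,k_1,k_2\ge1$, $X\in\mathbb{R}^{n\times p}$ with rows $X_{i:}$, $y\in\mathbb{R}^n$, $C>0$, $\nu\in(0,1]$, $A\in\mathbb{R}^{k_1\times p}$, $b\in\mathbb{R}^{k_1}$, $\Gamma\in\mathbb{R}^{k_2\times p}$, $d\in\mathbb{R}^{k_2}$; $\mathbf e$ is the all-ones vector and $Q=XX^T\in\mathbb{R}^{n\times n}$. Dual variables are $\theta=(\alpha,\alpha^*,\gamma,\mu)\in\mathbb{R}^n\times\mathbb{R}^n\times\mathbb{R}^{k_1}\times\mathbb{R}^{k_2}$. Let $M$ be the $(2n+k_1+k_2)\times p$ matrix with row blocks $X,-X,A,-\Gamma$, $\bar Q=MM^T$, $l=(y,-y,b,-d)$, and $f(\theta)=\frac12\theta^T\bar Q\theta+l^T\theta$. The feasible set $\mathcal F$ consists of $\theta$ with $0\le\alpha_i,\alpha_i^*\le C/n$ for all $i$, $\mathbf e^T(\alpha+\alpha^* )\le C\nu$, $\mathbf e^T(\alpha-\alpha^* )=0$, $\gamma_j\ge0$ for all $j$. Generalized SMO algorithm. Assume the rows of $X$ are pairwise distinct and no row of $A$ or $\Gamma$ is zero. Let $I_{up}(\alpha)=\{i:\alpha_i<C/n\}$, $I_{low}(\alpha)=\{i:\alpha_i>0\}$, and $I^*_{up},I^*_{low}$ the same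 sets for $\alpha^*$. Fix $\tau\ge0$ and $\theta^0\in\mathcal F$. At iteration $k$, with all gradients evaluated at $\theta^k$: pick $i\in\arg\min_{I_{up}(\alpha^k)}\nabla_{\alpha_i}f$, $j\in\arg\max_{I_{low}(\alpha^k)}\nabla_{\alpha_j}f$ and set $\Delta_1=\max(\nabla_{\alpha_j}f-\nabla_{\alpha_i}f,0)$ ($\Delta_1=0$ if either set is empty); define $i^*,j^*,\Delta_2$ identically for $\alpha^*$; $\Delta_3=\max(-\min_{s}\nabla_{\gamma_s}f,0)$; $\Delta_4=\max_s|\nabla_{\mu_s}f|$; $\Delta^k=\max(\Delta_1,\Delta_2,\Delta_3,\Delta_4)$. If $\Delta^k\le\tau$ stop; otherwise update the first block (in the order $\alpha,\alpha^*,\gamma,\mu$) whose $\Delta_m$ equals $\Delta^k$, leaving all other coordinates unchanged: Block $\alpha$: $t_q=-\frac{\nabla_{\alpha_i}f-\nabla_{\alpha_j}f}{Q_{ii}+Q_{jj}-2Q_{ij}}$, $I_1=\max(-\alpha_i^k,\alpha_j^k-C/n)$, $I_2=\min(\alpha_j^k,C/n-\alpha_i^k)$, $t^*=\min(\max(I_1,t_q),I_2)$, $\alpha_i^{k+1}=\alpha_i^k+t^*$, $\alpha_j^{k+1}=\alpha_j^k-t^*$. Block $\alpha^*$: the same formulas with $\alpha^*$, $(i^*,j^* )$, $\nabla_{\alpha^*}f$ and the same matrix $Q$. Block $\gamma$: $u\in\arg\min_s\nabla_{\gamma_s}f$, $\gamma_u^{k+1}=\max\big(\gamma_u^k-\nabla_{\gamma_u}f/(AA^T)_{uu},0\big)$.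 Block $\mu$: $u\in\arg\max_s|\nabla_{\mu_s}f|$, $\mu_u^{k+1}=\mu_u^k-\nabla_{\mu_u}f/(\Gamma\Gamma^T)_{uu}$. Clipping. An update in block $\alpha$ or $\alpha^*$ is called clipped if $t^*\neq t_q$; an update in block $\gamma$ is clipped if $\gamma_u^k-\nabla_{\gamma_u}f(\theta^k)/(AA^T)_{uu}<0$; updates in block $\mu$ are never clipped. *)

(* Defs.v *)
From Stdlib Require Import Reals List Arith.
Open Scope R_scope.

(* Problem data of the generalized nu-SVR dual.  Vectors are functions
   nat -> R (only indices below the dimension are meaningful); matrices are
   functions nat -> nat -> R (row, column). *)
Record svm_data := Build_svm {
  n_ : nat; p_ : nat; k1_ : nat; k2_ : nat;
  X_ : nat -> nat -> R;   (* n x p *)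
  y_ : nat -> R;          (* n *)
  C_ : R; nu_ : R;
  A_ : nat -> nat -> R;   (* k1 x p *)
  b_ : nat -> R;          (* k1 *)
  G_ : nat -> nat -> R;   (* Gamma, k2 x p *)
  d_ : nat -> R           (* k2 *)
}.

Fixpoint fsum (m : nat) (f : nat -> R) : R :=
  match m with O => 0 | S m' => fsum m' f + f m' end.

Section Algo.
Variable D : svm_data.
Let n := n_ D. Let p := p_ D. Let k1 := k1_ D. Let k2 := k2_ D.
Let X := X_ D. Let y := y_ D. Let C := C_ D. Let nu := nu_ D.
Let A := A_ D. Let b := b_ D. Let G := G_ D. Let d := d_ D.

(* theta is the concatenated vector (alpha, alpha*, gamma, mu) of length
   N = 2n + k1 + k2 : alpha_i = theta i, alpha*_i = theta (n+i),
   gamma_s = theta (2n+s), mu_s = theta (2n+k1+s). *)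
Definition Ndim : nat := (2 * n + k1 + k2)%nat.
Definition oA : nat := 0%nat.
Definition oAs : nat := n.
Definition oG : nat := (2 * n)%nat.
Definition oM : nat := (2 * n + k1)%nat.

Definition Mmat (r c : nat) : R :=
  if Nat.ltb r n then X r c
  else if Nat.ltb r (2 * n) then - X (r - n)%nat c
  else if Nat.ltb r (2 * n + k1) then A (r - 2 * n)%nat c
  else - G (r - (2 * n + k1))%nat c.

Definition lvec (r : nat) : R :=
  if Nat.ltb r n then y r
  else if Nat.ltb r (2 * n) then - y (r - n)%nat
  else if Nat.ltb r (2 * n + k1) then b (r - 2 * n)%nat
  else - d (r - (2 * n + k1))%nat.

Definition Qbar (r r' : nat) : R := fsum p (fun c => Mmat r c * Mmat r' c).

Definition fobj (theta : nat -> R) : R :=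
  / 2 * fsum Ndim (fun r => theta r * fsum Ndim (fun r' => Qbar r r' * theta r'))
  + fsum Ndim (fun r => lvec r * theta r).

(* its gradient (Qbar is symmetric): grad f(theta) = Qbar theta + l *)
Definition grad (theta : nat -> R) (r : nat) : R :=
  fsum Ndim (fun r' => Qbar r r' * theta r') + lvec r.

Definition Qm (i j : nat) : R := fsum p (fun c => X i c * X j c).
Definition AAt (u v : nat) : R := fsum p (fun c => A u c * A v c).
Definition GGt (u v : nat) : R := fsum p (fun c => G u c * G v c).

Definition feasible (theta : nat -> R) : Prop :=
  (forall i, (i < n)%nat ->
     0 <= theta (oA + i)%nat <= C / INR n /\
     0 <= theta (oAs + i)%nat <= C / INR n) /\
  fsum n (fun i => theta (oA + i)%nat + theta (oAs + i)%nat) <= C * nu /\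
  fsum n (fun i => theta (oA + i)%nat - theta (oAs + i)%nat) = 0 /\
  (forall s, (s < k1)%nat -> 0 <= theta (oG + s)%nat).

Definition lmin (l : list R) : option R :=
  fold_right (fun x acc => match acc with None => Some x | Some m => Some (Rmin x m) end) None l.
Definition lmax (l : list R) : option R :=
  fold_right (fun x acc => match acc with None => Some x | Some m => Some (Rmax x m) end) None l.

Definition Rltb (a c : R) : bool := if Rlt_dec a c then true else false.

Definition Iup (theta : nat -> R) (o : nat) : list nat :=
  filter (fun i => Rltb (theta (o + i)%nat) (C / INR n)) (seq 0 n).
Definition Ilow (theta : nat -> R) (o : nat) : list nat :=
  filter (fun i => Rltb 0 (theta (o + i)%nat)) (seq 0 n).

Definition DeltaPair (theta : nat -> R) (o : nat) : R :=
  match lmin (map (fun i => grad theta (o + i)%nat) (Iup theta o)),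
        lmax (map (fun j => grad theta (o + j)%nat) (Ilow theta o)) with
  | Some gi, Some gj => Rmax (gj - gi) 0
  | _, _ => 0
  end.

Definition Delta1 (theta : nat -> R) : R := DeltaPair theta oA.
Definition Delta2 (theta : nat -> R) : R := DeltaPair theta oAs.
Definition Delta3 (theta : nat -> R) : R :=
  match lmin (map (fun s => grad theta (oG + s)%nat) (seq 0 k1)) with
  | Some m => Rmax (- m) 0 | None => 0 end.
Definition Delta4 (theta : nat -> R) : R :=
  match lmax (map (fun s => Rabs (grad theta (oM + s)%nat)) (seq 0 k2)) with
  | Some m => m | None => 0 end.
Definition smoDelta (theta : nat -> R) : R :=
  Rmax (Rmax (Delta1 theta) (Delta2 theta)) (Rmax (Delta3 theta) (Delta4 theta)).

(* SMO update of a pair block (alpha if o = oA, alpha* if o = oAs);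
   cl records whether the update is clipped (t* <> t_q). *)
Definition pair_step (o : nat) (theta theta' : nat -> R) (cl : bool) : Prop :=
  exists i j : nat,
    In i (Iup theta o) /\
    (forall i', In i' (Iup theta o) -> grad theta (o + i)%nat <= grad theta (o + i')%nat) /\
    In j (Ilow theta o) /\
    (forall j', In j' (Ilow theta o) -> grad theta (o + j')%nat <= grad theta (o + j)%nat) /\
    let tq := - (grad theta (o + i)%nat - grad theta (o + j)%nat)
                / (Qm i i + Qm j j - 2 * Qm i j) in
    let I1 := Rmax (- theta (o + i)%nat) (theta (o + j)%nat - C / INR n) in
    let I2 := Rmin (theta (o + j)%nat) (C / INR n - theta (o + i)%nat) in
    let ts := Rmin (Rmax I1 tq) I2 in
    theta' (o + i)%nat = theta (o + i)%nat + ts /\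
    theta' (o + j)%nat = theta (o + j)%nat - ts /\
    (forall r, r <> (o + i)%nat -> r <> (o + j)%nat -> theta' r = theta r) /\
    (cl = true <-> ts <> tq).

Definition gamma_step (theta theta' : nat -> R) (cl : bool) : Prop :=
  exists u : nat,
    (u < k1)%nat /\
    (forall s, (s < k1)%nat -> grad theta (oG + u)%nat <= grad theta (oG + s)%nat) /\
    let v := theta (oG + u)%nat - grad theta (oG + u)%nat / AAt u u in
    theta' (oG + u)%nat = Rmax v 0 /\
    (forall r, r <> (oG + u)%nat -> theta' r = theta r) /\
    (cl = true <-> v < 0).

Definition mu_step (theta theta' : nat -> R) (cl : bool) : Prop :=
  exists u : nat,
    (u < k2)%nat /\
    (forall s, (s < k2)%nat -> Rabs (grad theta (oM + s)%nat) <= Rabs (grad theta (oM + u)%nat)) /\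
    theta' (oM + u)%nat = theta (oM + u)%nat - grad theta (oM + u)%nat / GGt u u /\
    (forall r, r <> (oM + u)%nat -> theta' r = theta r) /\
    cl = false.

(* Ties in the argmin/argmax are resolved arbitrarily. *)
Definition smo_step (theta theta' : nat -> R) (cl : bool) : Prop :=
  let De := smoDelta theta in
  (Delta1 theta = De /\ pair_step oA theta theta' cl) \/
  (Delta1 theta <> De /\ Delta2 theta = De /\ pair_step oAs theta theta' cl) \/
  (Delta1 theta <> De /\ Delta2 theta <> De /\ Delta3 theta = De /\
     gamma_step theta theta' cl) \/
  (Delta1 theta <> De /\ Delta2 theta <> De /\ Delta3 theta <> De /\
     mu_step theta theta' cl).

Definition data_ok : Prop :=
  (1 <= n)%nat /\ (1 <= p)%nat /\ (1 <= k1)%nat /\ (1 <= k2)%nat /\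
  0 < C /\ 0 < nu <= 1 /\
  (forall i j, (i < n)%nat -> (j < n)%nat -> i <> j ->
     exists c, (c < p)%nat /\ X i c <> X j c) /\
  (forall s, (s < k1)%nat -> exists c, (c < p)%nat /\ A s c <> 0) /\
  (forall s, (s < k2)%nat -> exists c, (c < p)%nat /\ G s c <> 0).

End Algo.

(* Main.v *)
Require Import Defs.
From Stdlib Require Import Reals List Arith Lia Lra FinFun Classical FunctionalExtensionality.
Open Scope R_scope.

Lemma fsum_ext m f g : (forall i, (i < m)%nat -> f i = g i) -> fsum m f = fsum m g.
Proof. induction m; simpl; intros H; [reflexivity|]. rewrite IHm by (intros; apply H; lia). rewrite H by lia; reflexivity. Qed.
Lemma fsum_plus m f g : fsum m (fun i => f i + g i) = fsum m f + fsum m g.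
Proof. induction m; simpl; [lra|]. rewrite IHm; ring. Qed.
Lemma fsum_mult_l m k f : fsum m (fun i => k * f i) = k * fsum m f.
Proof. induction m; simpl; [ring|]. rewrite IHm; ring. Qed.
Lemma fsum_zero m f : (forall i, (i < m)%nat -> f i = 0) -> fsum m f = 0.
Proof. induction m; simpl; intros H; [reflexivity|]. rewrite IHm by (intros; apply H; lia). rewrite H by lia; ring. Qed.
Lemma fsum_swap m q (F : nat -> nat -> R) :
  fsum m (fun i => fsum q (fun j => F i j)) = fsum q (fun j => fsum m (fun i => F i j)).
Proof. induction m; simpl. - symmetry; apply fsum_zero; intros; reflexivity.
  - rewrite IHm. rewrite <- fsum_plus. reflexivity. Qed.
Lemma fsum_point m a f : (forall r, r <> a -> f r = 0) -> (a < m)%nat -> fsum m f = f a.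
Proof. induction m; intros H Ha; [lia|]. simpl. destruct (Nat.eq_dec m a).
  - subst. rewrite fsum_zero; [ring|]. intros; apply H; lia.
  - rewrite IHm by (auto; lia). rewrite (H m) by auto; ring. Qed.
Lemma fsum_two m a b f g : (a < m)%nat -> (b < m)%nat -> a <> b ->
  (forall r, r <> a -> r <> b -> g r = f r) ->
  fsum m g = fsum m f + (g a - f a) + (g b - f b).
Proof. intros Ha Hb Hab H.
  assert (E: fsum m g = fsum m f + fsum m (fun r => (if Nat.eq_dec r a then g r - f r else 0))
     + fsum m (fun r => (if Nat.eq_dec r b then g r - f r else 0))).
  { rewrite <- fsum_plus, <- fsum_plus. apply fsum_ext. intros r _.
    destruct (Nat.eq_dec r a), (Nat.eq_dec r b); subst; try lia; try ring. rewrite H by auto; ring. }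
  rewrite E. rewrite (fsum_point m a (fun r => if Nat.eq_dec r a then g r - f r else 0)), (fsum_point m b (fun r => if Nat.eq_dec r b then g r - f r else 0)); auto.
  - cbv beta. destruct (Nat.eq_dec a a), (Nat.eq_dec b b); try congruence; ring.
  - intros r Hr; destruct (Nat.eq_dec r b); congruence.
  - intros r Hr; destruct (Nat.eq_dec r a); congruence. Qed.
Lemma fsum_ge0 m f : (forall i, (i < m)%nat -> 0 <= f i) -> 0 <= fsum m f.
Proof. induction m; simpl; intros H; [lra|]. assert (0 <= f m) by (apply H; lia).
  assert (0 <= fsum m f) by (apply IHm; intros; apply H; lia). lra. Qed.
Lemma fsum_pos m f c : (forall i, (i < m)%nat -> 0 <= f i) -> (c < m)%nat -> 0 < f c -> 0 < fsum m f.
Proof. induction m; simpl; intros H Hc Hf; [lia|]. assert (0 <= f m) by (apply H; lia).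
  destruct (Nat.eq_dec c m).
  - subst. assert (0 <= fsum m f) by (apply fsum_ge0; intros; apply H; lia). lra.
  - assert (0 < fsum m f) by (apply IHm; [intros; apply H; lia | lia | auto]). lra. Qed.

Fixpoint bcnt (m : nat) (P : nat -> bool) : nat :=
  match m with O => O | S m' => (bcnt m' P + Nat.b2n (P m'))%nat end.
Lemma bcnt_le m P : (bcnt m P <= m)%nat.
Proof. induction m; simpl; [lia|]. destruct (P m); simpl; lia. Qed.
Lemma bcnt_upd m P P' a b : a <> b ->
  (forall r, r <> a -> r <> b -> P' r = P r) ->
  (bcnt m P' + (if a <? m then Nat.b2n (P a) else 0) + (if b <? m then Nat.b2n (P b) else 0)
  = bcnt m P + (if a <? m then Nat.b2n (P' a) else 0) + (if b <? m then Nat.b2n (P' b) else 0))%nat.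
Proof. intros Hab H. induction m; simpl; [reflexivity|].
  destruct (Nat.ltb_spec a m), (Nat.ltb_spec a (S m)), (Nat.ltb_spec b m), (Nat.ltb_spec b (S m));
   try lia.
  all: destruct (Nat.eq_dec m a); [subst; try lia | ]; try (destruct (Nat.eq_dec m b); [subst; try lia|]);
    try (rewrite (H m) by auto); lia. Qed.
Lemma bcnt_two m P P' a b : a <> b -> (a < m)%nat -> (b < m)%nat ->
  (forall r, r <> a -> r <> b -> P' r = P r) ->
  (bcnt m P' + Nat.b2n (P a) + Nat.b2n (P b) = bcnt m P + Nat.b2n (P' a) + Nat.b2n (P' b))%nat.
Proof. intros Hab Ha Hb H. pose proof (bcnt_upd m P P' a b Hab H).
  replace (a <? m) with true in H0 by (symmetry; apply Nat.ltb_lt; auto).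
  replace (b <? m) with true in H0 by (symmetry; apply Nat.ltb_lt; auto). exact H0. Qed.

Lemma lmin_in l m : lmin l = Some m -> In m l.
Proof. revert m; induction l as [|x l IH]; simpl; intros m H; [discriminate|].
  destruct (lmin l) eqn:E; inversion H; subst.
  - unfold Rmin; destruct (Rle_dec x r); [left; auto | right; auto].
  - left; auto. Qed.
Lemma lmax_in l m : lmax l = Some m -> In m l.
Proof. revert m; induction l as [|x l IH]; simpl; intros m H; [discriminate|].
  destruct (lmax l) eqn:E; inversion H; subst.
  - unfold Rmax; destruct (Rle_dec x r); [right; auto | left; auto].
  - left; auto. Qed.
Lemma Rltb_true a c : Rltb a c = true -> a < c.
Proof. unfold Rltb; destruct (Rlt_dec a c); congruence. Qed.

Lemma pigeon (u : nat -> R) (L : list R) : (forall m, In (u m) L) -> (forall m, u (S m) < u m) -> False.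
Proof. intros Hin Hdec.
  assert (Hlt: forall m k, u (m + S k)%nat < u m).
  { intros m k; induction k. - rewrite Nat.add_1_r; apply Hdec.
    - replace (m + S (S k))%nat with (S (m + S k)) by lia. specialize (Hdec (m + S k)%nat). lra. }
  assert (Hinj: Injective u).
  { intros x y E. destruct (lt_eq_lt_dec x y) as [[H|H]|H]; auto.
    - specialize (Hlt x (y - S x)%nat). replace (x + S (y - S x))%nat with y in Hlt by lia. lra.
    - specialize (Hlt y (x - S y)%nat). replace (y + S (x - S y))%nat with x in Hlt by lia. lra. }
  assert (HN: NoDup (map u (seq 0 (S (length L))))).
  { apply Injective_map_NoDup; [exact Hinj| apply seq_NoDup]. }
  pose proof (NoDup_incl_length (l' := L) HN) as H.
  assert (incl (map u (seq 0 (S (length L)))) L).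
  { intros x Hx. apply in_map_iff in Hx. destruct Hx as [m [<- _]]. apply Hin. }
  specialize (H H0). rewrite length_map, seq_length in H. lia. Qed.

Fixpoint tuples (V : list R) (m : nat) : list (list R) :=
  match m with O => nil :: nil | S m' => flat_map (fun v => map (cons v) (tuples V m')) V end.
Lemma tuples_in V l : (forall x, In x l -> In x V) -> In l (tuples V (length l)).
Proof. induction l as [|x l IH]; simpl; intros H; [left; auto|].
  apply in_flat_map. exists x. split; [apply H; left; auto|]. apply in_map. apply IH. intros; apply H; right; auto. Qed.

Lemma eventually_const (bs : nat -> nat) (N : nat) (K : nat) :
  (forall k, (K <= k)%nat -> (bs k <= bs (S k))%nat) -> (forall k, (bs k <= N)%nat) ->
  exists K', (K <= K')%nat /\ forall k, (K' <= k)%nat -> ~ (bs k < bs (S k))%nat.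
Proof. intros Hmono Hb.
  assert (Hm: forall K0 k, (K <= K0)%nat -> (K0 <= k)%nat -> (bs K0 <= bs k)%nat).
  { intros K0 k H1 H2. induction H2; [lia|]. specialize (Hmono m ltac:(lia)). lia. }
  assert (forall d K0, (K <= K0)%nat -> (N - bs K0 <= d)%nat ->
    exists K', (K0 <= K')%nat /\ forall k, (K' <= k)%nat -> ~ (bs k < bs (S k))%nat).
  { induction d; intros K0 HK Hd.
    - exists K0; split; [lia|]. intros k Hk Hlt. pose proof (Hm K0 k HK Hk). pose proof (Hb (S k)). lia.
    - destruct (classic (exists k, (K0 <= k)%nat /\ (bs k < bs (S k))%nat)) as [[k [Hk Hlt]]|Hno].
      + destruct (IHd (S k)) as [K' [H1 H2]]; [lia| pose proof (Hm K0 k HK Hk); lia |].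
        exists K'; split; [lia|auto].
      + exists K0; split; [lia|]. intros k Hk Hlt. apply Hno; eauto. }
  destruct (H (N - bs K)%nat K) as [K' [H1 H2]]; [lia|lia|]. eauto. Qed.

Definition Ub D := C_ D / INR (n_ D).
Definition wv D (th : nat -> R) c := fsum (Ndim D) (fun r => Mmat D r c * th r).
Definition Phi D th := / 2 * fsum (p_ D) (fun c => wv D th c ^ 2) + fsum (Ndim D) (fun r => lvec D r * th r).

Lemma grad_w D th r : grad D th r = fsum (p_ D) (fun c => Mmat D r c * wv D th c) + lvec D r.
Proof. unfold grad, Qbar, wv. f_equal.
  transitivity (fsum (Ndim D) (fun r' => fsum (p_ D) (fun c => Mmat D r c * (Mmat D r' c * th r')))).
  - apply fsum_ext; intros. rewrite Rmult_comm, <- fsum_mult_l. apply fsum_ext; intros; ring.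
  - rewrite fsum_swap. apply fsum_ext; intros. apply fsum_mult_l. Qed.

Lemma Phi_change D th th' a b t : (a < Ndim D)%nat -> (b < Ndim D)%nat -> a <> b ->
  th' a = th a + t -> th' b = th b - t -> (forall r, r <> a -> r <> b -> th' r = th r) ->
  Phi D th' = Phi D th + t * (grad D th a - grad D th b)
     + t ^ 2 / 2 * fsum (p_ D) (fun c => (Mmat D a c - Mmat D b c) ^ 2).
Proof. intros Ha Hb Hab Ea Eb Eo.
  assert (Ew: forall c, wv D th' c = wv D th c + t * (Mmat D a c - Mmat D b c)).
  { intros c. unfold wv. rewrite (fsum_two _ a b (fun r => Mmat D r c * th r)); auto.
    - rewrite Ea, Eb. ring.
    - intros r H1 H2; rewrite Eo; auto. }
  assert (El: fsum (Ndim D) (fun r => lvec D r * th' r) = fsum (Ndim D) (fun r => lvec D r * th r) + t * (lvec D a - lvec D b)).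
  { rewrite (fsum_two _ a b (fun r => lvec D r * th r)); auto.
    - rewrite Ea, Eb. ring.
    - intros r H1 H2; rewrite Eo; auto. }
  unfold Phi. rewrite El, !grad_w.
  assert (Es: fsum (p_ D) (fun c => wv D th' c ^ 2) = fsum (p_ D) (fun c => wv D th c ^ 2)
     + 2 * t * (fsum (p_ D) (fun c => Mmat D a c * wv D th c) - fsum (p_ D) (fun c => Mmat D b c * wv D th c))
     + t ^ 2 * fsum (p_ D) (fun c => (Mmat D a c - Mmat D b c) ^ 2)).
  { rewrite <- !fsum_mult_l. rewrite Rminus_def.
    replace (- fsum (p_ D) (fun c => Mmat D b c * wv D th c)) with (fsum (p_ D) (fun c => - 1 * (Mmat D b c * wv D th c)))
      by (rewrite fsum_mult_l; ring).
    rewrite <- fsum_plus, <- fsum_mult_l, <- !fsum_plus. apply fsum_ext; intros c _. rewrite Ew. ring. }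
  rewrite Es. field. Qed.

Lemma Mmat_A D i c : (i < n_ D)%nat -> Mmat D (0 + i) c = X_ D i c.
Proof. intros H. unfold Mmat. simpl. replace (i <? n_ D) with true by (symmetry; apply Nat.ltb_lt; auto). reflexivity. Qed.
Lemma Mmat_As D i c : (i < n_ D)%nat -> Mmat D (n_ D + i) c = - X_ D i c.
Proof. intros H. unfold Mmat.
  replace (n_ D + i <? n_ D) with false by (symmetry; apply Nat.ltb_ge; lia).
  replace (n_ D + i <? 2 * n_ D) with true by (symmetry; apply Nat.ltb_lt; lia).
  replace (n_ D + i - n_ D)%nat with i by lia. reflexivity. Qed.

Lemma curv_eq D o i j : (o = 0 \/ o = n_ D)%nat -> (i < n_ D)%nat -> (j < n_ D)%nat ->
  fsum (p_ D) (fun c => (Mmat D (o + i) c - Mmat D (o + j) c) ^ 2) = Qm D i i + Qm D j j - 2 * Qm D i j.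
Proof. intros Ho Hi Hj. unfold Qm.
  replace (2 * fsum (p_ D) (fun c => X_ D i c * X_ D j c)) with (fsum (p_ D) (fun c => 2 * (X_ D i c * X_ D j c)))
    by (apply fsum_mult_l).
  rewrite Rminus_def.
  replace (- fsum (p_ D) (fun c => 2 * (X_ D i c * X_ D j c))) with (fsum (p_ D) (fun c => - 1 * (2 * (X_ D i c * X_ D j c))))
      by (rewrite fsum_mult_l; ring).
  rewrite <- !fsum_plus. apply fsum_ext; intros c _.
  destruct Ho; subst; [rewrite !Mmat_A by auto | rewrite !Mmat_As by auto]; ring. Qed.

Lemma curv_pos D i j : (i < n_ D)%nat -> (j < n_ D)%nat ->
  (exists c, (c < p_ D)%nat /\ X_ D i c <> X_ D j c) ->
  0 < Qm D i i + Qm D j j - 2 * Qm D i j.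
Proof. intros Hi Hj [c [Hc Hne]]. rewrite <- (curv_eq D 0 i j) by auto.
  apply (fsum_pos _ _ c); auto.
  - intros; apply pow2_ge_0.
  - rewrite !Mmat_A by auto. assert (X_ D i c - X_ D j c <> 0) by lra.
    pose proof (Rsqr_pos_lt _ H). unfold Rsqr in H0. simpl. lra. Qed.

Definition inv D (th : nat -> R) :=
  (forall r, (r < 2 * n_ D)%nat -> 0 <= th r <= Ub D) /\
  (forall s, (s < k1_ D)%nat -> 0 <= th (2 * n_ D + s)%nat).

Lemma Iup_in D th o i : In i (Iup D th o) -> (i < n_ D)%nat /\ th (o + i)%nat < Ub D.
Proof. unfold Iup. intros H. apply filter_In in H. destruct H as [H1 H2].
  apply in_seq in H1. split; [lia|]. apply Rltb_true in H2. exact H2. Qed.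
Lemma Ilow_in D th o i : In i (Ilow D th o) -> (i < n_ D)%nat /\ 0 < th (o + i)%nat.
Proof. unfold Ilow. intros H. apply filter_In in H. destruct H as [H1 H2].
  apply in_seq in H1. split; [lia|]. apply Rltb_true in H2. exact H2. Qed.

Lemma pair_inv D o th th' cl : inv D th -> (o = 0 \/ o = n_ D)%nat -> pair_step D o th th' cl -> inv D th'.
Proof. intros [Hbox Hg] Ho H.
  destruct H as [i [j [Hi [Hmin [Hj [Hmax Hr]]]]]]. cbv zeta in Hr.
  change (C_ D / INR (n_ D)) with (Ub D) in Hr.
  destruct Hr as [Ea [Eb [Eo _]]].
  apply Iup_in in Hi. apply Ilow_in in Hj. destruct Hi as [Hi Hx]. destruct Hj as [Hj Hz].
  assert (Ha: (o + i < 2 * n_ D)%nat) by lia. assert (Hb: (o + j < 2 * n_ D)%nat) by lia.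
  pose proof (Hbox _ Ha) as Bx. pose proof (Hbox _ Hb) as Bz.
  set (tq := - (grad D th (o + i) - grad D th (o + j)) / (Qm D i i + Qm D j j - 2 * Qm D i j)) in *.
  set (x := th (o + i)%nat) in *. set (z := th (o + j)%nat) in *.
  set (ts := Rmin (Rmax (Rmax (- x) (z - Ub D)) tq) (Rmin z (Ub D - x))) in *.
  assert (Hts: Rmax (- x) (z - Ub D) <= ts <= Rmin z (Ub D - x)).
  { unfold ts. unfold Rmin, Rmax. repeat destruct Rle_dec; lra. }
  assert (Hts2: - x <= ts /\ z - Ub D <= ts /\ ts <= z /\ ts <= Ub D - x).
  { revert Hts. unfold Rmin, Rmax. repeat destruct Rle_dec; lra. }
  split.
  - intros r Hr. destruct (Nat.eq_dec r (o + i)); [subst r; rewrite Ea; lra|].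
    destruct (Nat.eq_dec r (o + j)); [subst r; rewrite Eb; lra|]. rewrite Eo; auto.
  - intros s Hs. rewrite Eo by lia. auto. Qed.

Lemma gamma_inv D th th' cl : inv D th -> gamma_step D th th' cl -> inv D th'.
Proof. intros [Hbox Hg] [u [Hu [_ Hr]]]. cbv zeta in Hr. destruct Hr as [Eu [Eo _]].
  unfold oG in *. cbv zeta in *. split.
  - intros r Hr. rewrite Eo by lia. auto.
  - intros s Hs. destruct (Nat.eq_dec s u).
    + subst. rewrite Eu. apply Rmax_r.
    + rewrite Eo by lia. auto. Qed.

Lemma mu_inv D th th' cl : inv D th -> mu_step D th th' cl -> inv D th'.
Proof. intros [Hbox Hg] [u [Hu [_ [_ [Eo _]]]]]. unfold oM in *. cbv zeta in *. split.
  - intros r Hr. rewrite Eo by lia. auto.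
  - intros s Hs. rewrite Eo by lia. auto. Qed.

Lemma step_inv D th th' cl : inv D th -> smo_step D th th' cl -> inv D th'.
Proof. intros Hi H. unfold smo_step in H. cbv zeta in H.
  destruct H as [[_ H]|[[_ [_ H]]|[[_ [_ [_ H]]]|[_ [_ [_ H]]]]]].
  - apply (pair_inv D oA th th' cl); auto.
  - apply (pair_inv D (oAs D) th th' cl); auto.
  - eapply gamma_inv; eauto.
  - eapply mu_inv; eauto. Qed.

Definition bnd D (th : nat -> R) r : bool :=
  if Req_dec_T (th r) 0 then true else if Req_dec_T (th r) (Ub D) then true else false.
Definition Bc D th := bcnt (2 * n_ D) (bnd D th).
Definition swapc D (th th' : nat -> R) := exists a b, (a < 2 * n_ D)%nat /\ (b < 2 * n_ D)%nat /\
  th' a = th b /\ th' b = th a /\ forall r, r <> a -> r <> b -> th' r = th r.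
Definition clip_res D th th' := (Bc D th < Bc D th')%nat \/ (Bc D th' = Bc D th /\ swapc D th th' /\ Phi D th' < Phi D th).

Lemma bnd_false D th r : th r <> 0 -> th r <> Ub D -> bnd D th r = false.
Proof. intros; unfold bnd; destruct Req_dec_T; [congruence|]; destruct Req_dec_T; congruence. Qed.
Lemma bnd_true0 D th r : th r = 0 -> bnd D th r = true.
Proof. intros; unfold bnd; destruct Req_dec_T; congruence. Qed.
Lemma bnd_trueU D th r : th r = Ub D -> bnd D th r = true.
Proof. intros; unfold bnd; destruct Req_dec_T; auto; destruct Req_dec_T; congruence. Qed.
Lemma bnd_eq D th th' r r' : th' r = th r' -> bnd D th' r = bnd D th r'.
Proof. intros E; unfold bnd; rewrite E; reflexivity. Qed.

Lemma pair_clipped D o th th' : data_ok D -> inv D th -> (o = 0 \/ o = n_ D)%nat ->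
  0 < DeltaPair D th o -> pair_step D o th th' true -> clip_res D th th'.
Proof. intros Hdata [Hbox Hg] Ho HD H.
  destruct Hdata as [_ [_ [_ [_ [_ [_ [Hrows _]]]]]]].
  destruct H as [i [j [Hi [Hmin [Hj [Hmax Hr]]]]]]. cbv zeta in Hr.
  change (C_ D / INR (n_ D)) with (Ub D) in Hr.
  destruct Hr as [Ea [Eb [Eo Hcl]]]. destruct Hcl as [Hcl _]. specialize (Hcl eq_refl).
  assert (Hgab: grad D th (o + i) < grad D th (o + j)).
  { unfold DeltaPair in HD.
    destruct (lmin (map (fun i0 => grad D th (o + i0)) (Iup D th o))) eqn:E1; [|lra].
    destruct (lmax (map (fun j0 => grad D th (o + j0)) (Ilow D th o))) eqn:E2; [|lra].
    apply lmin_in, in_map_iff in E1. destruct E1 as [i' [Ei' Hi']].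
    apply lmax_in, in_map_iff in E2. destruct E2 as [j' [Ej' Hj']].
    pose proof (Hmin i' Hi'). pose proof (Hmax j' Hj').
    unfold Rmax in HD; destruct Rle_dec in HD; lra. }
  apply Iup_in in Hi. apply Ilow_in in Hj. destruct Hi as [Hi Hx]. destruct Hj as [Hj Hz].
  assert (Hij: i <> j) by (intro; subst; lra).
  assert (Ha: (o + i < 2 * n_ D)%nat) by lia. assert (Hb: (o + j < 2 * n_ D)%nat) by lia.
  assert (Hab: (o + i <> o + j)%nat) by lia.
  pose proof (Hbox _ Ha) as Bx. pose proof (Hbox _ Hb) as Bz.
  pose proof (curv_pos D i j Hi Hj (Hrows i j Hi Hj Hij)) as Hcurv.
  pose proof (curv_eq D o i j Ho Hi Hj) as Ecurv.
  set (curv := Qm D i i + Qm D j j - 2 * Qm D i j) in *.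
  set (ga := grad D th (o + i)%nat) in *. set (gb := grad D th (o + j)%nat) in *.
  set (tq := - (ga - gb) / curv) in *.
  set (x := th (o + i)%nat) in *. set (z := th (o + j)%nat) in *.
  assert (Htq: 0 < tq) by (unfold tq; apply Rdiv_lt_0_compat; lra).
  assert (Etq: tq * curv = gb - ga) by (unfold tq; field; lra).
  assert (E1: Rmax (Rmax (- x) (z - Ub D)) tq = tq).
  { apply Rmax_right. unfold Rmax; destruct Rle_dec; lra. }
  rewrite E1 in Ea, Eb, Hcl.
  assert (HI2: Rmin z (Ub D - x) < tq /\ Rmin tq (Rmin z (Ub D - x)) = Rmin z (Ub D - x)).
  { unfold Rmin in *. destruct (Rle_dec tq _); [congruence|]. split; [lra|reflexivity]. }
  destruct HI2 as [HI2 E2]. rewrite E2 in Ea, Eb.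
  set (ts := Rmin z (Ub D - x)) in *.
  assert (Hts: 0 < ts) by (unfold ts, Rmin; destruct Rle_dec; lra).
  assert (HPhi: Phi D th' < Phi D th).
  { rewrite (Phi_change D th th' (o + i) (o + j) ts); auto; try (unfold Ndim; lia).
    fold ga gb. rewrite Ecurv.
    assert (ts * curv < tq * curv) by (apply Rmult_lt_compat_r; lra). nra. }
  assert (Hcnt := bcnt_two (2 * n_ D) (bnd D th) (bnd D th') _ _ Hab Ha Hb
     (fun r H1 H2 => bnd_eq D th th' r r (Eo r H1 H2))).
  fold (Bc D th) (Bc D th') in Hcnt.
  unfold ts, Rmin in Ea, Eb. destruct (Rle_dec z (Ub D - x)).
  - destruct (Req_dec_T x 0) as [Ex|Ex].
    + right. split; [|split; auto].
      * rewrite (bnd_eq D th th' (o + i) (o + j)) in Hcnt by (rewrite Ea; fold z; lra).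
        rewrite (bnd_eq D th th' (o + j) (o + i)) in Hcnt by (rewrite Eb; fold x; lra). lia.
      * exists (o + i)%nat, (o + j)%nat. repeat split; auto; [rewrite Ea; fold z x; lra| rewrite Eb; fold x; lra].
    + left. rewrite (bnd_false D th (o + i)), (bnd_false D th (o + j)) in Hcnt by (fold x z; lra).
      rewrite (bnd_true0 D th' (o + j)) in Hcnt by (rewrite Eb; lra). simpl in Hcnt. lia.
  - destruct (Req_dec_T z (Ub D)) as [Ez|Ez].
    + right. split; [|split; auto].
      * rewrite (bnd_eq D th th' (o + i) (o + j)) in Hcnt by (rewrite Ea; fold z; lra).
        rewrite (bnd_eq D th th' (o + j) (o + i)) in Hcnt by (rewrite Eb; fold x; lra). lia.
      * exists (o + i)%nat, (o + j)%nat. repeat split; auto; [rewrite Ea; fold z x; lra| rewrite Eb; fold x; lra].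
    + left. rewrite (bnd_false D th (o + i)), (bnd_false D th (o + j)) in Hcnt by (fold x z; lra).
      rewrite (bnd_trueU D th' (o + i)) in Hcnt by (rewrite Ea; lra). simpl in Hcnt. lia.
Qed.

Lemma gamma_noclip D th th' : data_ok D -> inv D th -> 0 < Delta3 D th -> gamma_step D th th' true -> False.
Proof. intros Hdata [Hbox Hg] HD [u [Hu [Hmin Hr]]]. cbv zeta in Hr. destruct Hr as [_ [_ [Hcl _]]].
  specialize (Hcl eq_refl).
  destruct Hdata as [_ [_ [_ [_ [_ [_ [_ [HA _]]]]]]]].
  assert (HAA: 0 < AAt D u u).
  { destruct (HA u Hu) as [c [Hc Hne]]. unfold AAt. apply (fsum_pos _ _ c); auto.
    - intros; apply Rle_0_sqr. - apply Rlt_0_sqr; auto. }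
  unfold Delta3 in HD.
  destruct (lmin (map (fun s => grad D th (oG D + s)) (seq 0 (k1_ D)))) eqn:E; [|lra].
  apply lmin_in, in_map_iff in E. destruct E as [s [Es Hs]]. apply in_seq in Hs.
  pose proof (Hmin s ltac:(lia)). rewrite Es in H.
  assert (r < 0) by (unfold Rmax in HD; destruct Rle_dec in HD; lra).
  assert (grad D th (oG D + u) / AAt D u u < 0) by (apply Rdiv_neg_pos; lra).
  pose proof (Hg u Hu). unfold oG in *; cbv zeta in *. lra. Qed.

Lemma step_clip D th th' : data_ok D -> inv D th -> 0 < smoDelta D th -> smo_step D th th' true -> clip_res D th th'.
Proof. intros Hd Hi HD H. unfold smo_step in H. cbv zeta in H.
  destruct H as [[E H]|[[_ [E H]]|[[_ [_ [E H]]]|[_ [_ [_ H]]]]]].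
  - apply (pair_clipped D oA th th'); auto. unfold Delta1 in E. rewrite E; auto.
  - apply (pair_clipped D (oAs D) th th'); auto. unfold Delta2 in E. rewrite E; auto.
  - exfalso. apply (gamma_noclip D th th'); auto. rewrite E; auto.
  - destruct H as [_ [_ [_ [_ [_ H]]]]]. discriminate. Qed.

Lemma feas_inv D th : feasible D th -> inv D th.
Proof. intros [Hb [_ [_ Hg]]]. split.
  - intros r Hr. destruct (Nat.ltb_spec r (n_ D)).
    + destruct (Hb r H) as [H1 _]. exact H1.
    + destruct (Hb (r - n_ D)%nat ltac:(lia)) as [_ H1]. unfold oAs in H1; cbv zeta in H1.
      replace (n_ D + (r - n_ D))%nat with r in H1 by lia. exact H1.
  - intros s Hs. apply Hg; auto. Qed.

Theorem lemmaD3
  (n p k1 k2 : nat) (X : nat -> nat -> R) (y : nat -> R) (C nu : R)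
  (A : nat -> nat -> R) (b : nat -> R) (G : nat -> nat -> R) (d : nat -> R)
  (hdata : data_ok (Build_svm n p k1 k2 X y C nu A b G d))
  (theta : nat -> nat -> R) (cl : nat -> bool)
  (h0 : feasible (Build_svm n p k1 k2 X y C nu A b G d) (theta 0%nat))
  (hrun : forall k : nat,
     0 < smoDelta (Build_svm n p k1 k2 X y C nu A b G d) (theta k) /\
     smo_step (Build_svm n p k1 k2 X y C nu A b G d) (theta k) (theta (S k)) (cl k)) :
  forall K : nat, exists k : nat, (K <= k)%nat /\ cl k = false.
Proof.
  intros K. destruct (classic (exists k, (K <= k)%nat /\ cl k = false)) as [H|H]; [exact H|]. exfalso.
  assert (Hall: forall k, (K <= k)%nat -> cl k = true).
  { intros k Hk. destruct (cl k) eqn:E; auto. exfalso; apply H; eauto. }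
  set (D := Build_svm n p k1 k2 X y C nu A b G d) in *. clearbody D.
  assert (Hinv: forall k, inv D (theta k)).
  { induction k; [apply feas_inv; auto|]. apply (step_inv D (theta k) _ (cl k)); auto. apply hrun. }
  assert (HCR: forall k, (K <= k)%nat -> clip_res D (theta k) (theta (S k))).
  { intros k Hk. destruct (hrun k) as [H1 H2]. rewrite (Hall k Hk) in H2. apply step_clip; auto. }
  destruct (eventually_const (fun k => Bc D (theta k)) (2 * n_ D) K) as [K' [HK' Hconst]].
  { intros k Hk. destruct (HCR k Hk) as [H1|[H1 _]]; lia. }
  { intros k. apply bcnt_le. }
  assert (Hsw: forall k, (K' <= k)%nat -> swapc D (theta k) (theta (S k)) /\ Phi D (theta (S k)) < Phi D (theta k)).
  { intros k Hk. destruct (HCR k ltac:(lia)) as [H1|[_ [H1 H2]]]; [exfalso; eapply Hconst; eauto|auto]. }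
  set (N := (2 * n_ D)%nat). set (T0 := theta K'). set (V := map T0 (seq 0 N)).
  assert (HI: forall m, (forall r, (r < N)%nat -> In (theta (K' + m)%nat r) V) /\
                        (forall r, ~ (r < N)%nat -> theta (K' + m)%nat r = T0 r)).
  { induction m.
    - rewrite Nat.add_0_r. split; [intros r Hr; apply in_map, in_seq; lia| reflexivity].
    - destruct IHm as [IH1 IH2]. destruct (Hsw (K' + m)%nat ltac:(lia)) as [[a [b' [Ha [Hb [Ea [Eb Eo]]]]]] _].
      rewrite Nat.add_succ_r. split.
      + intros r Hr. destruct (Nat.eq_dec r a); [subst; rewrite Ea; apply IH1; auto|].
        destruct (Nat.eq_dec r b'); [subst; rewrite Eb; apply IH1; auto|]. rewrite Eo; auto.
      + intros r Hr. rewrite Eo by (intro; subst; auto). auto. }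
  set (mk := fun l r => if r <? N then nth r l 0 else T0 r).
  apply (pigeon (fun m => Phi D (theta (K' + m)%nat)) (map (fun l => Phi D (mk l)) (tuples V N))).
  - intros m. apply in_map_iff. exists (map (theta (K' + m)%nat) (seq 0 N)). split.
    + f_equal. apply functional_extensionality. intros r. unfold mk.
      destruct (Nat.ltb_spec r N).
      * rewrite nth_indep with (d' := theta (K' + m)%nat 0%nat) by (rewrite length_map, length_seq; auto).
        rewrite map_nth, seq_nth; auto.
      * symmetry; apply (proj2 (HI m)); lia.
    + replace N with (length (map (theta (K' + m)%nat) (seq 0 N))) at 2 by (rewrite length_map, length_seq; auto).
      apply tuples_in. intros x Hx. apply in_map_iff in Hx. destruct Hx as [r [<- Hr]]. apply in_seq in Hr.
      apply (proj1 (HI m)); lia.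
  - intros m. rewrite Nat.add_succ_r. apply Hsw; lia.
Qed.
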